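(* Let $S$ be a measurable space containing a distinguished element $0$, let $(\epsilon_i)_{i\in\mathbb{Z}}$ be an i.i.d. sequence of $S$-valued random variables, and let $f:S^\infty\to\mathbb{R}$ be bounded, with $\|f\|_\infty=\sup|f|<\infty$, satisfying: there is a decreasing sequence $(c_m)_{m\in\mathbb{N}}$ tending to $0$ such that for all $m$ and all $a_1,\ldots,a_{m+1},x_i,y_i\in S$ ($i\le 0$), $$|f(a_{m+1},\ldots,a_1,x_0,x_{-1},\ldots)-f(a_{m+1},\ldots,a_1,y_0,y_{-1},\ldots)|\le c_m\,|f(x_0,x_{-1},\ldots)-f(y_0,y_{-1},\ldots)|.$$ Define $X_n=f(\epsilon_n,\epsilon_{n-1},\ldots)$ and $X_n^{(m)}=f(\epsilon_n,\ldots,\epsilon_{n-m},0,0,\ldots)$ for $n\in\mathbb{Z}$. Let $\epsilon>0$ and let $m\in\mathbb{N}$ satisfy $2c_m\|f\|_\infty<\epsilon$. Then for every $n\ge1$, $d_H(\mathbb{X}_n^{(m)},\mathbb{X}_n)<\epsilon$ almost surely, where $\mathbb{X}_n=\{X_1,\ldots,X_n\}$ and $\mathbb{X}_n^{(m)}=\{X^{(m)}_1,\ldots,X^{(m)}_n\}$.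
   Context: $d_H$ is the Hausdorff distance between finite subsets of $\mathbb{R}$: $d_H(A,B)=\max(\max_{x\in A}\min_{y\in B}|x-y|,\max_{x\in B}\min_{y\in A}|x-y|)$. *)

(* Defs.v *)
From HB Require Import structures.
From mathcomp Require Import all_boot all_order all_algebra.
From mathcomp Require Import all_classical all_reals all_analysis.
Set Implicit Arguments. Unset Strict Implicit. Unset Printing Implicit Defensive.
Import Order.TTheory GRing.Theory Num.Theory.
Import numFieldNormedType.Exports.
Local Open Scope classical_set_scope.
Local Open Scope ring_scope.

Section Hausdorff.
Variable R : realType.
Definition dist_pt (x : R) (B : seq R) : R :=
  foldr (fun y acc => Num.min `|x - y| acc) `|x - head 0 B| B.
(* max_{x in A} dist(x,B)  (distances are >= 0, so 0 is a neutral start) *)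
Definition dir_haus (A B : seq R) : R :=
  foldr (fun x acc => Num.max (dist_pt x B) acc) 0 A.
Definition dH (A B : seq R) : R := Num.max (dir_haus A B) (dir_haus B A).
End Hausdorff.

Definition supnorm (R : realType) (T : Type) (f : T -> R) : R :=
  sup (range (fun x => `|f x|)).

Section SeqSpace.
Context {d : measure_display} (S : measurableType d).
Definition cylinders : set (set (nat -> S)) :=
  [set C | exists (i : nat) (A : set S), measurable A /\ C = (fun x => x i) @^-1` A].
Definition seq_measurable_fun (R : realType) (f : (nat -> S) -> R) : Prop :=
  forall B : set R, measurable B -> <<s cylinders >> (f @^-1` B).
End SeqSpace.

Section IID.
Context {d : measure_display} (S : measurableType d).
Context {dT : measure_display} (T : measurableType dT) (R : realType).
Variable P : probability T R.
Definition mutually_independent (eps : int -> T -> S) : Prop :=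
  forall (s : seq int) (A : int -> set S), uniq s ->
    (forall i, measurable (A i)) ->
    P (\big[setI/setT]_(i <- s) (eps i @^-1` A i)) =
    (\prod_(i <- s) P (eps i @^-1` A i))%E.
Definition identically_distributed (eps : int -> T -> S) : Prop :=
  forall (i j : int) (A : set S), measurable A ->
    P (eps i @^-1` A) = P (eps j @^-1` A).
Definition iid (eps : int -> T -> S) : Prop :=
  (forall i, measurable_fun setT (eps i)) /\
  mutually_independent eps /\ identically_distributed eps.
End IID.

(* X_n = f(eps_n, eps_{n-1}, ...) : coordinate k of the argument is eps_{n-k} *)
Definition Xproc {d} (S : measurableType d) (T : Type) (R : realType)
  (f : (nat -> S) -> R) (eps : int -> T -> S) (n : int) (w : T) : R :=
  f (fun k : nat => eps (n - k%:Z)%R w).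
Definition Xproc_trunc {d} (S : measurableType d) (T : Type) (R : realType)
  (s0 : S) (f : (nat -> S) -> R) (eps : int -> T -> S) (m : nat) (n : int)
  (w : T) : R :=
  f (fun k : nat => if (k <= m)%N then eps (n - k%:Z)%R w else s0).

(* Main.v *)
Require Import Defs.
From HB Require Import structures.
From mathcomp Require Import all_boot all_order all_algebra.
From mathcomp Require Import all_classical all_reals all_analysis.
Import Order.TTheory GRing.Theory Num.Theory.
Import numFieldNormedType.Exports.
Local Open Scope classical_set_scope.
Local Open Scope ring_scope.

Lemma foldr_min_le (R : realType) (x z y : R) (B : seq R) : y \in B ->
  foldr (fun y acc => Num.min `|x - y| acc) z B <= `|x - y|.
Proof.
elim: B => [//|b B IH]; rewrite inE => /orP [/eqP ->|yB] /=.
  by rewrite ge_min lexx.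
by rewrite ge_min (IH yB) orbT.
Qed.

Lemma dH_lt (R : realType) (g h : nat -> R) (s : seq nat) (e : R) :
  0 < e -> (forall k, k \in s -> `|g k - h k| < e) ->
  dH (map g s) (map h s) < e.
Proof.
move=> e0 H.
have D : forall (g h : nat -> R), (forall k, k \in s -> `|g k - h k| < e) ->
  dir_haus (map g s) (map h s) < e.
  move=> g' h' H'; rewrite /dir_haus.
  have : forall x, x \in map g' s -> dist_pt x (map h' s) < e.
    move=> x /mapP [k ks ->]; rewrite /dist_pt.
    apply: le_lt_trans (H' k ks); apply: foldr_min_le.
    by apply: map_f.
  elim: (map g' s) => [//|a A IH] HA /=.
  rewrite gt_max HA ?inE ?eqxx //= IH // => x xA.
  by apply: HA; rewrite inE xA orbT.
rewrite /dH gt_max D //= D // => k ks; rewrite distrC; exact: H.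
Qed.

Theorem lemma4p1 (R : realType) (d : measure_display) (S : measurableType d)
  (s0 : S) (dT : measure_display) (T : measurableType dT)
  (P : probability T R) (eps : int -> T -> S)
  (f : (nat -> S) -> R) (c : nat -> R) (e : R) (m : nat) (n : nat) :
  iid P eps ->
  seq_measurable_fun f ->
  (exists M : R, forall x, `|f x| <= M) ->
  (forall k l : nat, (k <= l)%N -> c l <= c k) ->
  c @ \oo --> 0 ->
  (forall (k : nat) (a x y : nat -> S),
     `|f (fun i => if (i <= k)%N then a i else x (i - k.+1)%N)
       - f (fun i => if (i <= k)%N then a i else y (i - k.+1)%N)|
     <= c k * `|f x - f y|) ->
  0 < e ->
  2 * c m * supnorm f < e ->
  (1 <= n)%N ->
  {ae P, forall w,
     dH [seq Xproc_trunc s0 f eps m k%:Z w | k <- iota 1 n]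
        [seq Xproc f eps k%:Z w | k <- iota 1 n] < e}.
Proof.
move=> _ _ [M HM] _ _ Hc e0 Hem _.
apply: aeW => w; apply: dH_lt => // k _.
have ub : forall x, `|f x| <= supnorm f.
  move=> x; apply: ub_le_sup; last by exists x.
  by exists M => _ [y _ <-].
have := Hc m (fun i => eps (k%:Z - i%:Z) w) (fun _ => s0)
   (fun j => eps (k%:Z - (j + m.+1)%:Z) w).
have -> : (fun i : nat => if (i <= m)%N then eps (k%:Z - i%:Z) w
     else eps (k%:Z - ((i - m.+1) + m.+1)%N%:Z) w) = (fun i => eps (k%:Z - i%:Z) w).
  apply: funext => i; case: leqP => // lt; by rewrite subnK.
rewrite /Xproc_trunc /Xproc => H.
have [cm0|cm0] := leP (c m) 0.
  apply: le_lt_trans H _; apply: le_lt_trans e0.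
  by apply: mulr_le0_ge0.
apply: le_lt_trans H _; apply: le_lt_trans Hem.
rewrite [2 * _]mulrC -mulrA ler_pM2l //.
apply: le_trans (ler_normB _ _) _.
by rewrite mulr_natl mulr2n; apply: lerD.
Qed.
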